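(* For $n\ge2$ and all $P,Q\in\Gamma_n$, $D_{Jh}(P\|Q)\le \frac1{12}D_{\Psi\Delta}(P\|Q)$.
   Context: $\Gamma_n=\{P=(p_1,\dots,p_n): p_i>0,\ \sum p_i=1\}$. $h(P\|Q)=\frac12\sum_{i=1}^n(\sqrt{p_i}-\sqrt{q_i})^2$; $J(P\|Q)=\sum_{i=1}^n(p_i-q_i)\ln\frac{p_i}{q_i}$; $\Delta(P\|Q)=\sum_{i=1}^n\frac{(p_i-q_i)^2}{p_i+q_i}$; $\Psi(P\|Q)=\sum_{i=1}^n\frac{(p_i-q_i)^2(p_i+q_i)}{p_iq_i}$. $D_{Jh}=\frac18J-h$, $D_{\Psi\Delta}=\frac1{16}\Psi-\frac14\Delta$. *)

(* Defs.v *)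
From Stdlib Require Import Reals Lra.
Open Scope R_scope.

Fixpoint sumn (n : nat) (f : nat -> R) : R :=
  match n with
  | O => 0
  | S k => sumn k f + f k
  end.

Definition in_Gamma (n : nat) (p : nat -> R) : Prop :=
  (forall i, (i < n)%nat -> 0 < p i) /\ sumn n p = 1.

Definition hell (n : nat) (p q : nat -> R) : R :=
  / 2 * sumn n (fun i => (sqrt (p i) - sqrt (q i)) ^ 2).

Definition Jdiv (n : nat) (p q : nat -> R) : R :=
  sumn n (fun i => (p i - q i) * ln (p i / q i)).

Definition Deltadiv (n : nat) (p q : nat -> R) : R :=
  sumn n (fun i => (p i - q i) ^ 2 / (p i + q i)).

Definition Psidiv (n : nat) (p q : nat -> R) : R :=
  sumn n (fun i => (p i - q i) ^ 2 * (p i + q i) / (p i * q i)).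

Definition D_Jh (n : nat) (p q : nat -> R) : R := / 8 * Jdiv n p q - hell n p q.

Definition D_PsiDelta (n : nat) (p q : nat -> R) : R :=
  / 16 * Psidiv n p q - / 4 * Deltadiv n p q.

(* Main.v *)
Require Import Defs.
From Stdlib Require Import Reals Lra.
From Coquelicot Require Import Coquelicot.
Open Scope R_scope.

Definition g (t : R) := 2*(t-1)/(t+1) + (t^2-1)^3/(48*t^2*(t^2+1)).
Definition h (t : R) := g t - ln t.
Definition h' (t : R) := (t-1)^2/t * ((t+1)^2*(t^4+4*t^2+1)/(24*t^2*(t^2+1)^2) - 1/(t+1)^2).

Lemma h_deriv t : 0 < t -> derivable_pt_lim h t (h' t).
Proof.
  intros Ht. apply is_derive_Reals. unfold h, g, h'.
  auto_derive.
  - repeat split; try lra; nra.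
  - field. repeat split; try lra; nra.
Qed.

Lemma poly_ineq t : 0 < t -> 24*t^2*(t^2+1)^2 <= (t+1)^4*(t^4+4*t^2+1).
Proof.
  intros Ht.
  set (s := t + /t).
  assert (Hs : s - 2 = (t-1)^2 / t) by (unfold s; field; lra).
  assert (Hs2 : 0 <= s - 2) by (rewrite Hs; apply Rdiv_le_0_compat; [apply pow2_ge_0|lra]).
  assert (E : (t+1)^4*(t^4+4*t^2+1) - 24*t^2*(t^2+1)^2 = t^4 * ((s-2)*((s-2)*(s^2+8*s+10)+16))).
  { unfold s. field. lra. }
  assert (0 <= t^4) by (apply pow_le; lra).
  assert (0 <= (s-2)*((s-2)*(s^2+8*s+10)+16)).
  { apply Rmult_le_pos; [lra|]. nra. }
  nra.
Qed.

Lemma h'_nonneg t : 0 < t -> 0 <= h' t.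
Proof.
  intros Ht. unfold h'. apply Rmult_le_pos.
  - apply Rdiv_le_0_compat; [apply pow2_ge_0|lra].
  - pose proof (poly_ineq t Ht).
    assert (A : 0 < 24*t^2*(t^2+1)^2) by (apply Rmult_lt_0_compat; [nra| apply pow_lt; nra]).
    assert (B : 0 < (t+1)^2) by (apply pow_lt; lra).
    apply Rge_le, Rge_minus, Rle_ge.
    apply (Rmult_le_reg_r (24*t^2*(t^2+1)^2 * (t+1)^2)); [nra|].
    replace (1 / (t + 1) ^ 2 * (24 * t ^ 2 * (t ^ 2 + 1) ^ 2 * (t + 1) ^ 2)) with (24 * t ^ 2 * (t ^ 2 + 1) ^ 2) by (field; repeat split; nra).
    replace ((t + 1) ^ 2 * (t ^ 4 + 4 * t ^ 2 + 1) / (24 * t ^ 2 * (t ^ 2 + 1) ^ 2) *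
 (24 * t ^ 2 * (t ^ 2 + 1) ^ 2 * (t + 1) ^ 2)) with ((t+1)^4*(t^4+4*t^2+1)) by (field; repeat split; nra).
    lra.
Qed.

Lemma key t : 0 < t -> (t - 1) * ln t <= (t - 1) * g t.
Proof.
  intros Ht.
  assert (H1 : h 1 = 0) by (unfold h, g; rewrite ln_1; field).
  destruct (Rtotal_order t 1) as [Hlt|[Heq|Hgt]].
  - destruct (MVT_cor2 h h' t 1 Hlt) as [c [Hc Hc2]].
    { intros c Hc. apply h_deriv. lra. }
    pose proof (h'_nonneg c ltac:(lra)).
    assert (h t <= 0) by nra. unfold h in *. nra.
  - subst. lra.
  - destruct (MVT_cor2 h h' 1 t Hgt) as [c [Hc Hc2]].
    { intros c Hc. apply h_deriv. lra. }
    pose proof (h'_nonneg c ltac:(lra)).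
    assert (0 <= h t) by nra. unfold h in *. nra.
Qed.

Lemma term_ineq p q : 0 < p -> 0 < q ->
  / 8 * ((p - q) * ln (p / q)) + (- / 2) * (sqrt p - sqrt q) ^ 2 <=
  / 12 * / 16 * ((p - q) ^ 2 * (p + q) / (p * q)) + (- (/ 12 * / 4)) * ((p - q) ^ 2 / (p + q)).
Proof.
  intros Hp Hq.
  pose proof (sqrt_lt_R0 p Hp) as Ha. pose proof (sqrt_lt_R0 q Hq) as Hb.
  set (a := sqrt p) in *. set (b := sqrt q) in *.
  assert (Ep : p = a * a) by (unfold a; rewrite sqrt_sqrt; lra).
  assert (Eq : q = b * b) by (unfold b; rewrite sqrt_sqrt; lra).
  set (t := a / b).
  assert (Ht : 0 < t) by (unfold t; apply Rdiv_lt_0_compat; lra).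
  assert (El : ln (p / q) = 2 * ln t).
  { replace (p / q) with (t * t) by (unfold t; rewrite Ep, Eq; field; lra).
    rewrite ln_mult by lra. ring. }
  rewrite El. clearbody a b.
  pose proof (key t Ht) as K.
  assert (Hc : 0 < b * (a + b) / 4) by (apply Rdiv_lt_0_compat; nra).
  assert (K2 : b * (a + b) / 4 * ((t - 1) * ln t) <= b * (a + b) / 4 * ((t - 1) * g t))
    by (apply Rmult_le_compat_l; lra).
  assert (L : / 8 * ((p - q) * (2 * ln t)) = b * (a + b) / 4 * ((t - 1) * ln t)).
  { subst p q. unfold t. field. lra. }
  assert (R : / 12 * / 16 * ((p - q) ^ 2 * (p + q) / (p * q)) + (- (/ 12 * / 4)) * ((p - q) ^ 2 / (p + q))
              - (- / 2) * (a - b) ^ 2 = b * (a + b) / 4 * ((t - 1) * g t)).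
  { subst p q. unfold t, g. field. repeat split; nra. }
  lra.
Qed.

Lemma sumn_lin n (f g : nat -> R) a c :
  sumn n (fun i => a * f i + c * g i) = a * sumn n f + c * sumn n g.
Proof. induction n; simpl; [ring|rewrite IHn; ring]. Qed.

Lemma sumn_le n (f g : nat -> R) :
  (forall i, (i < n)%nat -> f i <= g i) -> sumn n f <= sumn n g.
Proof.
  induction n; intros H; simpl; [lra|].
  pose proof (H n ltac:(auto)). assert (sumn n f <= sumn n g) by (apply IHn; auto). lra.
Qed.

Theorem proposition5p9 (n : nat) (p q : nat -> R) :
  (2 <= n)%nat -> in_Gamma n p -> in_Gamma n q ->
  D_Jh n p q <= / 12 * D_PsiDelta n p q.
Proof.
  intros _ [Hp _] [Hq _].
  unfold D_Jh, D_PsiDelta, Jdiv, hell, Psidiv, Deltadiv.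
  replace (/ 8 * sumn n (fun i => (p i - q i) * ln (p i / q i)) -
    / 2 * sumn n (fun i => (sqrt (p i) - sqrt (q i)) ^ 2)) with
    (sumn n (fun i => / 8 * ((p i - q i) * ln (p i / q i)) + (- / 2) * (sqrt (p i) - sqrt (q i)) ^ 2))
    by (rewrite sumn_lin; ring).
  replace (/ 12 * (/ 16 * sumn n (fun i => (p i - q i) ^ 2 * (p i + q i) / (p i * q i)) -
     / 4 * sumn n (fun i => (p i - q i) ^ 2 / (p i + q i)))) with
    (sumn n (fun i => / 12 * / 16 * ((p i - q i) ^ 2 * (p i + q i) / (p i * q i)) + (- (/ 12 * / 4)) * ((p i - q i) ^ 2 / (p i + q i))))
    by (rewrite sumn_lin; ring).
  apply sumn_le. intros i Hi. apply term_ineq; auto.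
Qed.
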